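(* Let $\mathsf{H}^\ast$ be a clique coverage of $\mathrm{G}$ with $|\mathsf{H}^\ast|=d$, and let $(\mathrm{Q}_1,\dots,\mathrm{Q}_d)$ be an ordering of $\mathsf{H}^\ast$ in which every clique of $\mathsf{H}^\ast$ appears exactly once. For each clique $\mathrm{C}\in\mathsf{H}^\ast$ let $\mathbf{M}_{\mathrm{C}}\in\mathbb{R}^{nb\times nb}$ be a clique-gossip matrix with arbitrary blocks $\mathbf{A}_{ij}(\mathrm{C})$. Put $\mathbf{F}=\mathbf{M}_{\mathrm{Q}_d}\cdots\mathbf{M}_{\mathrm{Q}_{s+1}}\mathbf{M}_{\mathrm{Q}_s}\cdots\mathbf{M}_{\mathrm{Q}_1}$ and, for $s\in\{1,\dots,d-1\}$, let $\mathbf{F}_{\pi_s}$ be the same product with the two factors $\mathbf{M}_{\mathrm{Q}_s}$ and $\mathbf{M}_{\mathrm{Q}_{s+1}}$ interchanged, i.e. $\mathbf{F}_{\pi_s}=\mathbf{M}_{\mathrm{Q}_d}\cdots\mathbf{M}_{\mathrm{Q}_{s+2}}\mathbf{M}_{\mathrm{Q}_s}\mathbf{M}_{\mathrm{Q}_{s+1}}\mathbf{M}_{\mathrm{Q}_{s-1}}\cdots\mathbf{M}_{\mathrm{Q}_1}$. If either (i) $\mathrm{Q}_s$ and $\mathrm{Q}_{s+1}$ are not adjacent, or (ii) $\mathrm{Q}_s$ and $\mathrm{Q}_{s+1}$ are adjacent but neither of them lies on any cycle of the generalized line graph $\mathcal{L}(\mathsf{H}^\ast)$, then $\mathbf{F}$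 and $\mathbf{F}_{\pi_s}$ have the same characteristic polynomial.
   Context: $\mathrm{G}=(\mathrm{V},\mathrm{E})$ is a simple undirected graph with $\mathrm{V}=\{1,\dots,n\}$; $\mathrm{G}[\mathrm{S}]$ is the induced subgraph on $\mathrm{S}\subset\mathrm{V}$. A clique is a subset $\mathrm{C}\subset\mathrm{V}$ with $\mathrm{G}[\mathrm{C}]$ complete. A clique coverage of $\mathrm{G}$ is a finite set $\mathsf{H}^\ast$ of cliques whose union is $\mathrm{V}$ and whose union graph $\bigcup_{\mathrm{C}\in\mathsf{H}^\ast}\mathrm{G}[\mathrm{C}]$ is connected. Two distinct cliques are adjacent if they intersect. The generalized line graph $\mathcal{L}(\mathsf{H}^\ast)$ has vertex set $\mathsf{H}^\ast$, with distinct $\mathrm{C},\mathrm{C}'$ joined iff $\mathrm{C}\cap\mathrm{C}'\neq\emptyset$; a cycle means a cycle in this graph in the usual graph-theoretic sense. Fix $b\ge1$. A clique-gossip matrix for a clique $\mathrm{C}$ is a block matrix $\mathbf{M}_{\mathrm{C}}\in\mathbb{R}^{nb\times nb}$ with $b\times b$ blocks, whose $(i,j)$ block equals an arbitrary matrix $\mathbf{A}_{ij}(\mathrm{C})\in\mathbb{R}^{b\times b}$ when $i,j\in\mathrm{C}$, equals $\mathbf{I}_b$ when $i=j\notin\mathrm{C}$, and equals $\mathbf{0}_b$ otherwise. (It represents the update $\mathbf{x}_i\mapsto\sum_{j\in\mathrm{C}}\mathbf{A}_{ij}(\mathrm{C})\mathbf{x}_j$ for $i\in\mathrm{C}$, $\mathbf{x}_i\mapsto\mathbf{x}_i$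 for $i\notin\mathrm{C}$.) *)

(* Defs.v *)
From HB Require Import structures.
From mathcomp Require Import all_boot all_order all_algebra all_fingroup.
Set Implicit Arguments. Unset Strict Implicit. Unset Printing Implicit Defensive.
Import Order.TTheory GRing.Theory Num.Theory.
Local Open Scope ring_scope.

(* Simple undirected graph on V = 'I_n (vertices 0..n-1 stand for 1..n). *)
Definition simple_graph (n : nat) (e : rel 'I_n) : Prop :=
  irreflexive e /\ symmetric e.

Definition is_clique (n : nat) (e : rel 'I_n) (C : {set 'I_n}) : Prop :=
  forall i j, i \in C -> j \in C -> i != j -> e i j.

Definition union_graph_rel (n : nat) (H : {set {set 'I_n}}) : rel 'I_n :=
  fun i j => (i != j) && [exists C in H, (i \in C) && (j \in C)].

Definition clique_coverage (n : nat) (e : rel 'I_n) (H : {set {set 'I_n}}) : Prop :=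
  [/\ forall C, C \in H -> is_clique e C,
      \bigcup_(C in H) C = [set: 'I_n] &
      forall i j : 'I_n, connect (union_graph_rel H) i j].

(* Adjacency of cliques (distinct and intersecting): edges of L(H). *)
Definition clique_adj (n : nat) : rel {set 'I_n} :=
  fun C C' => (C != C') && (C :&: C' != set0).

Definition on_cycle (n : nat) (H : {set {set 'I_n}}) (C : {set 'I_n}) : Prop :=
  exists p : seq {set 'I_n},
    [/\ (3 <= size p)%N, uniq p, {subset p <= H}, path.cycle (@clique_adj n) p & C \in p].

Definition gossip_mx (R : pzRingType) (n b : nat) (C : {set 'I_n})
    (A : 'I_n -> 'I_n -> 'M[R]_b) : 'M[R]_(\sum_(i < n) b) :=
  mxblock (p_ := fun _ : 'I_n => b) (q_ := fun _ : 'I_n => b)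
    (fun i j => if (i \in C) && (j \in C) then A i j
                else if i == j then 1%:M else 0).

Definition mxprod (R : pzRingType) (m : nat) (s : seq 'M[R]_m) : 'M[R]_m :=
  foldr (@mulmx R m m m) 1%:M s.

(* M_{Q_d} ... M_{Q_1}  (0-indexed: M_(Q (d-1)) *m ... *m M_(Q 0)). *)
Definition ordered_prod (R : pzRingType) (n b d : nat) (Q : 'I_d -> {set 'I_n})
    (A : {set 'I_n} -> 'I_n -> 'I_n -> 'M[R]_b) : 'M[R]_(\sum_(i < n) b) :=
  mxprod [seq gossip_mx (Q k) (A (Q k)) | k <- rev (enum 'I_d)].

(* Main.v *)
Require Import Defs.
From HB Require Import structures.
From mathcomp Require Import all_boot all_order all_algebra all_fingroup.
Import Order.TTheory GRing.Theory Num.Theory.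
Local Open Scope ring_scope.
Lemma char_poly_mulC (R : fieldType) m (X Y : 'M[R]_m) :
  char_poly (X *m Y) = char_poly (Y *m X).
Proof.
pose t : {poly R} := 'X.
pose Xp := map_mx polyC X; pose Yp := map_mx polyC Y.
pose M := block_mx (t%:M) Xp Yp (1%:M : 'M_m).
pose L := block_mx (1%:M : 'M_m) (- Xp) 0 (t%:M).
have e1 : L *m M = block_mx (char_poly_mx (X *m Y)) 0 (t%:M *m Yp) (t%:M).
  rewrite mulmx_block !mul1mx !mul0mx !add0r mulNmx mulmx1 addrN.
  by rewrite /char_poly_mx map_mxM -/Xp -/Yp mulmx1.
have e2 : M *m L = block_mx (t%:M) 0 Yp (char_poly_mx (Y *m X)).
  rewrite mulmx_block !mulmx1 !mulmx0 !addr0 mulmxN mul1mx.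
  by rewrite -scalar_mxC addNr mulmxN /char_poly_mx map_mxM -/Xp -/Yp addrC.
have := congr1 determinant e1; have := congr1 determinant e2.
rewrite !det_mulmx det_lblock det_ublock det_lblock.
rewrite !det_scalar expr1n !mul1r => H2 H1.
apply: (@mulIf _ (t ^+ m)); first by rewrite expf_eq0 polyX_eq0 andbF.
by rewrite /char_poly -H1 mulrC H2 mulrC.
Qed.

Section Gossip.
Variables (R : pzRingType) (n b : nat).
Implicit Types (C : {set 'I_n}) (A : 'I_n -> 'I_n -> 'M[R]_b) (i j k : 'I_n).

Definition gblk (C : {set 'I_n}) (A : 'I_n -> 'I_n -> 'M[R]_b) i j : 'M[R]_b :=
  if (i \in C) && (j \in C) then A i j else if i == j then 1%:M else 0.

Lemma gblk_out C A i j : i \notin C -> gblk C A i j = if i == j then 1%:M else 0.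
Proof. by rewrite /gblk => /negbTE ->. Qed.

Lemma sum_gblk_out C A i (X : 'I_n -> 'M[R]_b) : i \notin C ->
  \sum_j gblk C A i j *m X j = X i.
Proof.
move=> iC; rewrite (bigD1 i) //= big1 => [|j ji].
  by rewrite gblk_out // eqxx mul1mx addr0.
by rewrite gblk_out // eq_sym (negbTE ji) mul0mx.
Qed.

Lemma sum_gblk_in C A i k (X : 'I_n -> 'M[R]_b) : i \in C ->
  (forall j, j \in C -> X j = if j == k then 1%:M else 0) ->
  \sum_j gblk C A i j *m X j = gblk C A i k.
Proof.
move=> iC hX; rewrite (bigD1 k) //= big1 => [|j jk].
  rewrite addr0; case kC: (k \in C); first by rewrite hX // eqxx mulmx1.
  rewrite /gblk iC kC /=; case: eqP => [ik|]; last by rewrite mul0mx.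
  by rewrite -ik iC in kC.
case jC: (j \in C); first by rewrite hX // (negbTE jk) mulmx0.
rewrite /gblk iC jC /=; case: eqP => [ij|]; last by rewrite mul0mx.
by rewrite -ij iC in jC.
Qed.

Lemma gossip_comm C C' A A' : C :&: C' = set0 ->
  gossip_mx C A *m gossip_mx C' A' = gossip_mx C' A' *m gossip_mx C A.
Proof.
move=> dis; rewrite /gossip_mx !mul_mxblock; apply: eq_mxblock => i k.
have dC j : j \in C -> j \notin C'.
  by move=> jC; apply/negP => jC'; move: (in_set0 j); rewrite -dis inE jC jC'.
have dC' j : j \in C' -> j \notin C.
  by move=> jC'; apply/negP => jC; move: (in_set0 j); rewrite -dis inE jC jC'.
rewrite -/(gblk C A i) -/(gblk C' A' i).
under eq_bigr do rewrite -/(gblk C A _ _) -/(gblk C' A' _ _).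
under [RHS]eq_bigr do rewrite -/(gblk C A _ _) -/(gblk C' A' _ _).
case iC: (i \in C).
  rewrite (@sum_gblk_in C A i k (fun j => gblk C' A' j k)) // ?sum_gblk_out ?dC // => j jC.
  by rewrite gblk_out ?dC.
case iC': (i \in C').
  rewrite sum_gblk_out ?iC // (@sum_gblk_in C' A' i k (fun j => gblk C A j k)) // => j jC.
  by rewrite gblk_out ?dC'.
by rewrite !sum_gblk_out ?iC ?iC' // !gblk_out ?iC ?iC'.
Qed.
End Gossip.

Section Prod.
Variables (R : pzRingType) (m : nat).
Implicit Types (M N : 'M[R]_m) (s t : seq 'M[R]_m).

Lemma mxprod_cons M s : mxprod (M :: s) = M *m mxprod s.
Proof. by []. Qed.

Lemma comm_mxprod M s : (forall N, N \in s -> M *m N = N *m M) ->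
  M *m mxprod s = mxprod s *m M.
Proof.
elim: s => [|N s IH] h /=; first by rewrite /mxprod /= mulmx1 mul1mx.
rewrite -/(mxprod s) mulmxA h ?mem_head // -!mulmxA IH // => N' N's.
by apply: h; rewrite in_cons N's orbT.
Qed.

Lemma mxprod_comm s t :
  (forall M N, M \in s -> N \in t -> M *m N = N *m M) ->
  mxprod s *m mxprod t = mxprod t *m mxprod s.
Proof.
move=> h; elim: s h => [|M s IH] h /=; first by rewrite /mxprod /= mulmx1 mul1mx.
have IH' := IH (fun M' N Ms => h M' N (mem_behead (s:=M :: s) Ms)).
rewrite -/(mxprod s) -(mulmxA M) IH' !mulmxA (comm_mxprod M t) // => N Nt.
apply: h => //; exact: mem_head.
Qed.

Lemma mxprod_split (I : eqType) (f : I -> 'M[R]_m) (p : pred I) (l : seq I) :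
  (forall x y, x \in l -> y \in l -> ~~ p x -> p y -> f x *m f y = f y *m f x) ->
  mxprod (map f l) =
  mxprod (map f (filter p l)) *m mxprod (map f (filter (predC p) l)).
Proof.
elim: l => [|x l IH] h /=; first by rewrite /mxprod /= mulmx1.
have h' : forall x y, x \in l -> y \in l -> ~~ p x -> p y -> f x *m f y = f y *m f x.
  by move=> u v ul vl; apply: h; rewrite in_cons ?ul ?vl orbT.
rewrite -/(mxprod (map f l)) IH //; case px: (p x) => /=.
  by rewrite mulmxA.
rewrite !mulmxA (comm_mxprod (f x)) // => N.
case/mapP => y; rewrite mem_filter => /andP [py yl] ->.
by apply: h; rewrite ?mem_head ?in_cons ?yl ?orbT ?px.
Qed.

End Prod.


Lemma path_subset (T : eqType) (e : rel T) (P : pred T) x p :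
  (forall u v, e u v -> P v) -> path e x p -> {subset p <= P}.
Proof.
move=> hP; elim: p x => [|y p IH] x //= /andP [exy pth] z.
rewrite in_cons => /orP [/eqP ->|zp]; first exact: hP exy.
exact: IH pth z zp.
Qed.

Lemma cut_lemma n (H : {set {set 'I_n}}) (Qa Qb : {set 'I_n}) :
  Qa \in H -> Qb \in H -> Qa != Qb -> clique_adj Qa Qb -> ~ on_cycle H Qa ->
  exists S : {set {set 'I_n}}, [/\ Qa \in S, Qb \notin S &
   forall x y, x \in H -> y \in H -> x \in S -> y \notin S ->
     ~~ ((x == Qa) && (y == Qb)) -> x :&: y = set0].
Proof.
move=> QaH QbH nab adj noc.
pose r : rel {set 'I_n} := fun C D => [&& C \in H, D \in H, clique_adj C D &
   ~~ (((C == Qa) && (D == Qb)) || ((C == Qb) && (D == Qa)))].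
pose S := [set C | connect r Qa C].
have QaS : Qa \in S by rewrite inE connect0.
have QbS : Qb \notin S.
  apply/negP; rewrite inE => /connectP [p pth lst].
  move: lst; case: (shortenP pth) => p' pth' uq _ /esym lstb.
  apply: noc; exists (Qa :: p'); split => //.
  - case: p' pth' uq lstb => [|y [|z p']] //=.
      by move=> _ _ eab; rewrite eab eqxx in nab.
    move=> /andP [ray _] _ eyb.
    by move: ray; rewrite eyb => /and4P [_ _ _]; rewrite !eqxx.
  - move=> C; rewrite in_cons => /orP [/eqP -> //|].
    by apply: (@path_subset _ r (fun C => C \in H) Qa p') => // u v /and4P [].
  - rewrite /= rcons_path lstb; apply/andP; split.
      by apply: sub_path pth' => u v /and4P [].
    by move: adj; rewrite /clique_adj eq_sym setIC.
  - exact: mem_head.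
exists S; split => // x y xH yH xS yS nxy.
have xny : x != y by apply: contraNneq yS => <-.
have xb : x != Qb by apply: contraNneq QbS => <-.
apply/eqP; case: eqP => // /eqP nz; move/negP: yS; case.
move: xS; rewrite !inE => cx; apply: connect_trans cx (connect1 _).
rewrite /r xH yH /clique_adj xny nz /= negb_or nxy /= (negbTE xb).
done.
Qed.

Lemma alg_swap (R : pzRingType) m (a b c d e g : 'M[R]_m) :
  b *m c = c *m b -> d *m e = e *m d -> b *m e = e *m b -> a *m b = b *m a ->
  a *m d = d *m a -> e *m g = g *m e -> c *m g = g *m c -> a *m g = g *m a ->
  (a *m b) *m (c *m (d *m (e *m g))) = (a *m (c *m e)) *m (b *m (d *m g)) /\
  (a *m b) *m (d *m (c *m (e *m g))) = (b *m (d *m g)) *m (a *m (c *m e)).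
Proof.
move=> hbc hde hbe hab had heg hcg hag; split; rewrite !mulmxA.
  rewrite -(mulmxA a b c) hbc mulmxA -(mulmxA (a *m c *m b) d e) hde mulmxA.
  by rewrite -(mulmxA (a *m c) b e) hbe mulmxA.
rewrite hab -(mulmxA b a d) had mulmxA -(mulmxA (b *m d *m a *m c) e g) heg mulmxA.
rewrite -(mulmxA (b *m d *m a) c g) hcg mulmxA.
by rewrite -(mulmxA (b *m d) a g) hag mulmxA.
Qed.

Lemma mxprod_cat (R : pzRingType) m (s t : seq 'M[R]_m) :
  mxprod (s ++ t) = mxprod s *m mxprod t.
Proof.
elim: s => [|M s IH] /=; first by rewrite /mxprod /= mul1mx.
by rewrite -/(mxprod (s ++ t)) IH mulmxA.
Qed.

Theorem theorem1 (R : realFieldType) (n b d : nat) (hb : (0 < b)%N)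
  (e : rel 'I_n) (hG : simple_graph e)
  (H : {set {set 'I_n}}) (hH : clique_coverage e H) (hd : #|H| = d)
  (Q : 'I_d -> {set 'I_n}) (hQinj : injective Q) (hQH : forall k, Q k \in H)
  (A : {set 'I_n} -> 'I_n -> 'I_n -> 'M[R]_b)
  (s s' : 'I_d) (hss' : val s' = (val s).+1) :
  (~~ clique_adj (Q s) (Q s') \/
   (clique_adj (Q s) (Q s') /\ ~ on_cycle H (Q s) /\ ~ on_cycle H (Q s'))) ->
  char_poly (ordered_prod Q A) = char_poly (ordered_prod (Q \o tperm s s') A).
Proof.
move=> hyp.
have ss' : s != s'.
  apply/eqP => es; move: hss'; rewrite es => /eqP.
  by rewrite -{1}(addn0 (val s')) -addn1 eqn_add2l.
have hss : nat_of_ord s' = (nat_of_ord s).+1 := hss'.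
pose E := enum 'I_d.
have sizeE : size E = d by rewrite size_enum_ord.
have hs1 : ((nat_of_ord s).+1 < d)%N by rewrite -hss.
have hE : E = take s E ++ s :: s' :: drop (nat_of_ord s).+2 E.
  rewrite -{1}(cat_take_drop s E) (drop_nth s) ?sizeE ?(ltn_trans _ hs1) //.
  rewrite (drop_nth s) ?sizeE // nth_ord_enum -hss nth_ord_enum.
  done.
set e1 := take s E; set e2 := drop (nat_of_ord s).+2 E.
have uE : uniq (s :: s' :: e1 ++ e2).
  have := enum_uniq 'I_d; rewrite -/E hE.
  by rewrite (perm_uniq (introT permPl (perm_catCA e1 [:: s; s'] e2))).
have nin k : k \in rev e2 ++ rev e1 -> (k != s) && (k != s').
  rewrite mem_cat !mem_rev orbC -mem_cat => kin.
  move: uE => /= /andP [ns /andP [ns' _]].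
  rewrite in_cons negb_or in ns; case/andP: ns => _ ns.
  by apply/andP; split; [apply: contraNneq ns => <- | apply: contraNneq ns' => <-].
have revE : rev E = rev e2 ++ s' :: s :: rev e1.
  by rewrite {1}hE rev_cat !rev_cons !cat_rcons.
pose f := fun C => gossip_mx C (A C).
pose F := fun k => f (Q k).
pose P1 := mxprod [seq F k | k <- rev e2].
pose P2 := mxprod [seq F k | k <- rev e1].
have eF : ordered_prod Q A = P1 *m (f (Q s') *m (f (Q s) *m P2)).
  by rewrite /ordered_prod -/E revE map_cat mxprod_cat.
have em (l : seq 'I_d) : {subset l <= rev e2 ++ rev e1} ->
    [seq gossip_mx (Q (tperm s s' k)) (A (Q (tperm s s' k))) | k <- l] =
    [seq F k | k <- l].
  move=> hl; apply/eq_in_map => k kin; rewrite /F /f tpermD //.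
  - by case/andP: (nin k (hl k kin)); rewrite eq_sym.
  - by case/andP: (nin k (hl k kin)) => _; rewrite eq_sym.
have eFp : ordered_prod (Q \o tperm s s') A = P1 *m (f (Q s) *m (f (Q s') *m P2)).
  rewrite /ordered_prod -/E revE map_cat mxprod_cat /= tpermL tpermR !em //.
  - by move=> k kin; rewrite mem_cat kin orbT.
  - by move=> k kin; rewrite mem_cat kin.
have nQ : Q s != Q s' by rewrite (inj_eq hQinj).
case: hyp => [nadj | [adj [noc _]]].
  have dis : Q s' :&: Q s = set0.
    by apply/eqP; move: nadj; rewrite /clique_adj nQ /= negbK setIC.
  rewrite eF eFp; have -> // : f (Q s') *m (f (Q s) *m P2) = f (Q s) *m (f (Q s') *m P2).
  by rewrite !mulmxA /f gossip_comm.
have [S [QsS QsS' Dis]] := @cut_lemma n H (Q s) (Q s') (hQH s) (hQH s') nQ adj noc.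
have D x y : x \in H -> y \in H -> x \in S -> y \notin S ->
    ~~ ((x == Q s) && (y == Q s')) -> f x *m f y = f y *m f x.
  by move=> xH yH xS yS nxy; rewrite /f gossip_comm // Dis.
pose L := rev e2 ++ rev e1.
have nQk k : k \in L -> (Q k != Q s) && (Q k != Q s').
  by move/nin; rewrite !(inj_eq hQinj).
have Dkk x y : x \in L -> y \in L -> Q x \in S -> Q y \notin S -> F x *m F y = F y *m F x.
  move=> xL yL xS yS; apply: D => //; case/andP: (nQk x xL) => nx _.
  by rewrite (negbTE nx).
have Dsk y : y \in L -> Q y \notin S -> f (Q s) *m F y = F y *m f (Q s).
  move=> yL yS; apply: D => //; case/andP: (nQk y yL) => _ ny.
  by rewrite (negbTE ny) andbF.
have Dks y : y \in L -> Q y \in S -> F y *m f (Q s') = f (Q s') *m F y.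
  move=> yL yS; apply: D => //; case/andP: (nQk y yL) => ny _.
  by rewrite (negbTE ny).
have L2 k : k \in rev e2 -> k \in L by move=> kin; rewrite mem_cat kin.
have L1 k : k \in rev e1 -> k \in L by move=> kin; rewrite mem_cat kin orbT.
have memF (l : seq 'I_d) (P : pred 'I_d) N : N \in [seq F k | k <- l & P k] ->
    exists2 y, (y \in l) && P y & N = F y.
  by case/mapP => y; rewrite mem_filter => /andP [py yl] ->; exists y; rewrite ?yl ?py.
pose p := fun k => Q k \notin S.
pose a := mxprod [seq F k | k <- rev e2 & p k].
pose bb := mxprod [seq F k | k <- rev e2 & predC p k].
pose ee := mxprod [seq F k | k <- rev e1 & p k].
pose g := mxprod [seq F k | k <- rev e1 & predC p k].
have hP1 : P1 = a *m bb.
  apply: mxprod_split => x y xl yl /negbNE px py.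
  by rewrite Dkk ?L2.
have hP2 : P2 = ee *m g.
  apply: mxprod_split => x y xl yl /negbNE px py.
  by rewrite Dkk ?L1.
have hbc : bb *m f (Q s') = f (Q s') *m bb.
  symmetry; apply: comm_mxprod => N /memF [y /andP [yl /negbNE yS] ->].
  exact: esym (Dks y (L2 y yl) yS).
have hde : f (Q s) *m ee = ee *m f (Q s).
  apply: comm_mxprod => N /memF [y /andP [yl yS] ->]; exact: Dsk (L1 y yl) yS.
have hbe : bb *m ee = ee *m bb.
  apply: mxprod_comm => M N /memF [x /andP [xl /negbNE xS] ->] /memF [y /andP [yl yS] ->].
  exact: Dkk (L2 _ xl) (L1 _ yl) xS yS.
have hab : a *m bb = bb *m a.
  apply: mxprod_comm => M N /memF [x /andP [xl xS] ->] /memF [y /andP [yl /negbNE yS] ->].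
  exact: esym (Dkk _ _ (L2 _ yl) (L2 _ xl) yS xS).
have had : a *m f (Q s) = f (Q s) *m a.
  symmetry; apply: comm_mxprod => N /memF [x /andP [xl xS] ->]; exact: Dsk (L2 _ xl) xS.
have heg : ee *m g = g *m ee.
  apply: mxprod_comm => M N /memF [x /andP [xl xS] ->] /memF [y /andP [yl /negbNE yS] ->].
  exact: esym (Dkk _ _ (L1 _ yl) (L1 _ xl) yS xS).
have hcg : f (Q s') *m g = g *m f (Q s').
  apply: comm_mxprod => N /memF [y /andP [yl /negbNE yS] ->].
  exact: esym (Dks y (L1 y yl) yS).
have hag : a *m g = g *m a.
  apply: mxprod_comm => M N /memF [x /andP [xl xS] ->] /memF [y /andP [yl /negbNE yS] ->].
  exact: esym (Dkk _ _ (L1 _ yl) (L2 _ xl) yS xS).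
have [e1' e2'] := @alg_swap _ _ a bb (f (Q s')) (f (Q s)) ee g hbc hde hbe hab had heg hcg hag.
by rewrite eF eFp hP1 hP2 e1' e2' char_poly_mulC.
Qed.
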